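(* Let $q\in\mathbb{R}$. For all $A,B\in M_2(\mathbb{C})$ with $\operatorname{tr}A=0$, $$\|AB-qBA\|_F^2\le (1+q^2)\,\|A\|_F^2\,\|B\|_F^2 .$$ The bound is sharp: for every $q$ there are $A,B\in M_2(\mathbb{C})$ with $\operatorname{tr}A=0$ and $B\neq0$ attaining equality.
   Context: $\|X\|_F=\sqrt{\operatorname{tr}(XX^\dagger)}$ denotes the Frobenius norm. *)

(* Defs.v *)
From HB Require Import structures.
From mathcomp Require Import all_boot all_order all_algebra.
From mathcomp.real_closed Require Import complex.
Set Implicit Arguments. Unset Strict Implicit. Unset Printing Implicit Defensive.
Import Order.TTheory GRing.Theory Num.Theory.
Local Open Scope ring_scope.

Definition adjmx (R : rcfType) (m n : nat) (X : 'M[R[i]]_(m, n)) : 'M[R[i]]_(n, m) :=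
  \matrix_(i < n, j < m) conjc (X j i).

(* Frobenius norm ||X||_F = sqrt(tr(X X^dagger)); tr(X X^dagger) is a
   nonnegative real number, we take its real part to land in R. *)
Definition frob (R : rcfType) (n : nat) (X : 'M[R[i]]_n) : R :=
  Num.sqrt (complex.Re (\tr (X *m adjmx X))).

(* Main.v *)
Require Import Defs.
From HB Require Import structures.
From mathcomp Require Import all_boot all_order all_algebra.
From mathcomp.real_closed Require Import complex.
From mathcomp Require Import ring.
Import Order.TTheory GRing.Theory Num.Theory.
Local Open Scope ring_scope.
Local Open Scope complex_scope.

Section S.
Variable R : rcfType.
Definition T (X : 'M[R[i]]_2) := \tr (X *m adjmx X).

Lemma TE X : T X = X ord0 ord0 * (X ord0 ord0)^* + X ord0 (lift ord0 ord0) * (X ord0 (lift ord0 ord0))^*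
  + (X (lift ord0 ord0) ord0 * (X (lift ord0 ord0) ord0)^* + X (lift ord0 ord0) (lift ord0 ord0) * (X (lift ord0 ord0) (lift ord0 ord0))^*).
Proof.
rewrite /T /mxtrace !big_ord_recl big_ord0 !mxE !big_ord_recl !big_ord0 !mxE.
rewrite !addr0. done.
Qed.

Lemma cD (x y : R[i]) : conjc (x + y) = conjc x + conjc y. Proof. exact: rmorphD. Qed.
Lemma cB (x y : R[i]) : conjc (x - y) = conjc x - conjc y. Proof. exact: rmorphB. Qed.
Lemma cN (x : R[i]) : conjc (- x) = - conjc x. Proof. exact: rmorphN. Qed.
Lemma cM (x y : R[i]) : conjc (x * y) = conjc x * conjc y. Proof. exact: rmorphM. Qed.
Lemma cq (q : R) : conjc (q%:C) = q%:C. Proof. by rewrite /= oppr0. Qed.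

Lemma cs (x : R[i]) : GRing.RMorphism.sort (complex_conjc__canonical__GRing_RMorphism R) x = conjc x.
Proof. by []. Qed.

Lemma key (q : R) (A B : 'M[R[i]]_2) : \tr A = 0 ->
  (1 + q ^+ 2)%:C * T A * T B = T (A *m B - (q%:C)%C *: (B *m A)) + T (adjmx A *m B + (q%:C)%C *: (B *m adjmx A)).
Proof.
move=> trA.
have hd : A (lift ord0 ord0) (lift ord0 ord0) = - A ord0 ord0.
  move: trA; rewrite /mxtrace !big_ord_recl big_ord0 addr0 => /eqP.
  by rewrite addr_eq0 => /eqP ->; rewrite opprK.
have -> : (1 + q^+2)%:C = 1 + q%:C ^+ 2 :> R[i] by rewrite rmorphD rmorph1 rmorphXn.
rewrite !TE /adjmx !mxE !big_ord_recl !big_ord0 !mxE hd.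
rewrite ?addr0 !(rmorphD, rmorphN, rmorphB, rmorphM) !cs !cq ?conjcK.
ring.
Qed.

Lemma ReD (x y : R[i]) : complex.Re (x + y) = complex.Re x + complex.Re y.
Proof. by case: x => a b; case: y => c d. Qed.

Lemma T_ge0 X : 0 <= T X.
Proof. by rewrite TE; apply: addr_ge0; apply: addr_ge0; apply: mulcJ_ge0. Qed.

Lemma T_real X : T X = (complex.Re (T X))%:C.
Proof.
have := T_ge0 X; rewrite lecE => /andP[/eqP h _].
by move: h; case: (T X) => a b /= ->.
Qed.

Lemma frob2 X : frob X ^+ 2 = complex.Re (T X).
Proof.
rewrite /frob sqr_sqrtr //.
by have := T_ge0 X; rewrite lecE => /andP[_ ].
Qed.

Lemma frob_id (q : R) (A B : 'M[R[i]]_2) : \tr A = 0 ->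
  (1 + q ^+ 2) * frob A ^+ 2 * frob B ^+ 2 =
  frob (A *m B - (q%:C)%C *: (B *m A)) ^+ 2 + frob (adjmx A *m B + (q%:C)%C *: (B *m adjmx A)) ^+ 2.
Proof.
move=> trA; rewrite !frob2 -ReD -(key q A B trA).
rewrite (T_real A) (T_real B) -!rmorphM.
by [].
Qed.
End S.

Theorem proposition3 (R : rcfType) (q : R) :
  (forall A B : 'M[R[i]]_2, \tr A = 0 ->
     frob (A *m B - (q%:C)%C *: (B *m A)) ^+ 2
       <= (1 + q ^+ 2) * frob A ^+ 2 * frob B ^+ 2)
  /\
  (exists A B : 'M[R[i]]_2, [/\ \tr A = 0, B != 0 &
     frob (A *m B - (q%:C)%C *: (B *m A)) ^+ 2
       = (1 + q ^+ 2) * frob A ^+ 2 * frob B ^+ 2]).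
Proof.
split.
  move=> A B trA; rewrite (@frob_id R q _ B trA) lerDl; exact: sqr_ge0.
pose A : 'M[R[i]]_2 := delta_mx 0 1.
pose B : 'M[R[i]]_2 := \matrix_(i, j) (if i == j then (if i == 0 then - q%:C else 1) else 0).
have trA : \tr A = 0.
  by rewrite /A /mxtrace !big_ord_recl big_ord0 !mxE /= !addr0.
apply: (ex_intro _ A); apply: (ex_intro _ B); split => //.
  apply/eqP => /matrixP/(_ 1 1); rewrite !mxE /= => /eqP; by rewrite oner_eq0.
have hN : adjmx A *m B + q%:C *: (B *m adjmx A) = 0.
  apply/matrixP => i j; rewrite /A /B /adjmx !mxE !big_ord_recl !big_ord0 !mxE.
  have e0 : ((- 0)*i)%C = 0 :> R[i] by rewrite oppr0.
  have e1 : (1 -i* 0)%C = 1 :> R[i] by rewrite oppr0.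
  by case: i => [[|[|//]]] ?; case: j => [[|[|//]]] ? /=;
    rewrite ?e0 ?e1 ?(mul0r, mulr0, add0r, addr0, mul1r, mulr1) ?addNr.
have H := @frob_id R q A B trA.
rewrite hN in H.
have H0 : frob (0 : 'M[R[i]]_2) ^+ 2 = 0.
  by rewrite frob2 TE !mxE !mul0r !addr0.
by rewrite H H0 addr0.
Qed.
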